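(* Let $c \geq 1$, $r \geq 0$, $k \geq 1$ be integers. Then every $c$-NSOBDD computing the function $F_{r,k}$ has size at least $2^{rk/(4c-2)}$.
   Context: For a graph $G$, the CNF $CNF(G)$ has a variable $X_u$ for each vertex $u$ and a variable $X_{u,v}=X_{v,u}$ for each edge $\{u,v\}$; its clauses are $(X_u \vee X_{u,v} \vee X_v)$ for each edge $\{u,v\}$. $T_r$ is the complete binary tree of height $r$; $CT_{r,k}$ is obtained from $T_r$ by replacing each node by a $k$-clique and, for each edge $\{a,b\}$ of $T_r$, joining every vertex of the clique of $a$ to every vertex of the clique of $b$; $F_{r,k}=CNF(CT_{r,k})$. A non-deterministic branching program is a directed acyclic graph with one root and one leaf, some of whose edges are labelled by literals of variables. A path is consistent if it does not contain two edges labelled by opposite literals of the same variable; a consistent root-leaf path is a computational path. The program computes $F$: an assignment $S$ (viewed as a set of literals) satisfies $F$ iff some computational path has all its edge labels in $S$. A $c$-NSOBDD (nondeterministic semantic $c$-OBDD) is such a program for which there is a permutation $SV$ of its variables such that every computational path $P$ can be written as a concatenation $P=P_1+\dots+P_c$ of subpaths where on each $P_i$ each variable occurs at most once as a label and the sequence of labels along $P_i$ is ordered according to $SV$. Size is the number of nodes. *)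

(* Defs.v *)
From mathcomp Require Import all_boot.
From Stdlib Require Reals.

Set Implicit Arguments.
Unset Strict Implicit.
Unset Printing Implicit Defensive.

(* An edge {u,v} is represented as the 2-element vertex set [set u; v]. *)
Definition is_edge_set (V : finType) (e : rel V) (A : {set V}) : bool :=
  [exists u, exists v, e u v && (A == [set u; v])].

Definition edgeT (V : finType) (e : rel V) : finType :=
  {A : {set V} | is_edge_set e A}.

(* Variables of CNF(G): X_u (inl u) for vertices, X_{u,v} (inr A) for edges. *)
Definition cnf_var (V : finType) (e : rel V) : finType := (V + edgeT e)%type.

(* CNF(G) evaluated at an assignment: for each edge A = {u,v} the clause
   (X_u \/ X_{u,v} \/ X_v). *)
Definition CNF (V : finType) (e : rel V) (a : cnf_var e -> bool) : bool :=
  [forall A : edgeT e,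
     a (inr A) || [exists u in val A, a (inl u)]].

(* T_r: complete binary tree of height r (2^(r+1)-1 nodes), heap-indexed: *)
(* node j : 'I_(2^(r+1)-1) stands for position j+1; the children of      *)
(* position p are 2p and 2p+1.                                           *)
Definition Tnode (r : nat) : finType := 'I_(2 ^ r.+1 - 1).

Definition Tchild (r : nat) (a b : Tnode r) : bool :=
  ((b : nat).+1 == ((a : nat).+1).*2) || ((b : nat).+1 == (((a : nat).+1).*2).+1).

Definition Tadj (r : nat) : rel (Tnode r) := fun a b => Tchild a b || Tchild b a.

Definition CTvert (r k : nat) : finType := (Tnode r * 'I_k)%type.

Definition CTadj (r k : nat) : rel (CTvert r k) := fun x y =>
  ((x.1 == y.1) && (x.2 != y.2)) || Tadj x.1 y.1.

Definition Fvar (r k : nat) : finType := cnf_var (@CTadj r k).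

Definition F (r k : nat) : (Fvar r k -> bool) -> bool := @CNF _ (@CTadj r k).

(* Nodes: finType N; edges: finType E with source/target maps and an    *)
(* optional label, a literal (x, b) meaning "x = b".                     *)

Section BP.
Variables (X N E : finType) (src dst : E -> N) (lab : E -> option (X * bool)).

Fixpoint walk (u : N) (p : seq E) (v : N) : Prop :=
  match p with
  | [::] => u = v
  | ed :: p' => src ed = u /\ walk (dst ed) p' v
  end.

Definition labels (p : seq E) : seq (X * bool) := pmap lab p.

Definition consistent (p : seq E) : Prop :=
  forall x : X, ~ ((x, true) \in labels p /\ (x, false) \in labels p).

Definition is_BP (root leaf : N) : Prop :=
  (forall u p, walk u p u -> p = [::]) /\
  (forall n : N, (forall ed, dst ed != n) <-> n = root) /\
  (forall n : N, (forall ed, src ed != n) <-> n = leaf).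

Definition computational (root leaf : N) (p : seq E) : Prop :=
  walk root p leaf /\ consistent p.

Definition computes (root leaf : N) (f : (X -> bool) -> bool) : Prop :=
  forall a : X -> bool,
    f a <-> exists p, computational root leaf p /\
                      forall l, l \in labels p -> a l.1 = l.2.

Definition ordered_by (SV : seq X) (q : seq E) : bool :=
  let vs := map fst (labels q) in
  uniq vs && sorted (fun x y => index x SV <= index y SV) vs.

Definition NSOBDD (c : nat) (root leaf : N) : Prop :=
  exists SV : seq X, perm_eq SV (enum X) /\
    forall p, computational root leaf p ->
      exists ps : seq (seq E),
        size ps = c /\ flatten ps = p /\ all (ordered_by SV) ps.

End BP.

(* Main.v *)
Require Import Defs.
From mathcomp Require Import all_boot.
From Stdlib Require Reals.
From mathcomp Require Import zify.
From Stdlib Require Import ClassicalEpsilon.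
From Stdlib Require Lra.

Set Implicit Arguments.
Unset Strict Implicit.
Unset Printing Implicit Defensive.

Section PartA.
Variables (X N E : finType) (src dst : E -> N) (lab : E -> option (X * bool)).

Lemma walk_cat u p q v : walk src dst u (p ++ q) v <->
  exists w, walk src dst u p w /\ walk src dst w q v.
Proof.
elim: p u => [|ed p IH] u /=.
  split; [by move=> H; exists u | by case=> w [-> H]].
split.
  case=> Hs /IH [w [H1 H2]]; exists w; split => //.
by case=> w [[Hs H1] H2]; split => //; apply/IH; exists w.
Qed.

Definition chain u v (P : seq (seq E)) (bs : seq N) :=
  size P = (size bs).+1 /\ forall n, n < size P ->
    walk src dst (nth u (u :: bs) n) (nth [::] P n) (nth v (rcons bs v) n).

Lemma chain_walk u v P bs : chain u v P bs -> walk src dst u (flatten P) v.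
Proof.
elim: bs u P => [|b bs IH] u [|q P] //=; try by case.
  case=> [[/eqP]]; rewrite size_eq0 => /eqP -> H.
  by have := H 0 isT; rewrite /= cats0.
case=> [[Hs] H]; apply/walk_cat; exists b; split; first by apply: (H 0).
apply: IH; split => // n Hn.
have := H n.+1 Hn => /=.
rewrite (set_nth_default b u) //= -Hs //.
Qed.

Lemma walk_chain u v P : walk src dst u (flatten P) v -> P != [::] ->
  exists bs, chain u v P bs.
Proof.
elim: P u => [|q P IH] u //= H _.
case: P IH H => [|q' P] IH H.
  exists [::]; split => // [[|n]] //= _; by move: H; rewrite cats0.
move/walk_cat: H => [w [H1 H2]].
have [bs [Hs Hb]] := IH w H2 isT.
exists (w :: bs); split; first by move: Hs => /= ->.
move=> [|n] Hn //=.
have := Hb n Hn; rewrite /= (set_nth_default w u) //.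
by move: Hn Hs => /= Hn [<-].
Qed.

Definition sideok (side : X -> bool) (b : bool) (q : seq E) :=
  forall l, l \in labels lab q -> side l.1 = b.

Lemma labels_cons ed q : labels lab (ed :: q) =
  if lab ed is Some l then l :: labels lab q else labels lab q.
Proof. by rewrite /labels /=; case: (lab ed). Qed.

Lemma split_seg (SV : seq X) t q :
  sorted (fun x y => index x SV <= index y SV) (map fst (labels lab q)) ->
  exists a b, q = a ++ b /\ sideok (fun x => index x SV < t) true a /\
                           sideok (fun x => index x SV < t) false b.
Proof.
elim: q => [|ed q IH] Hs.
  by exists [::], [::]; split => //; split => l.
move: Hs; rewrite labels_cons.
case Hl: (lab ed) => [[x s]|] /= Hs.
  have Hs' := path_sorted Hs.
  have [a [b [Hq [Ha Hb]]]] := IH Hs'.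
  case Hx: (index x SV < t).
    exists (ed :: a), b; split; first by rewrite Hq.
    split => // l.
    by rewrite labels_cons Hl in_cons => /orP [/eqP -> //|]; apply: Ha.
  exists [::], (ed :: q); split => //; split => // l.
  rewrite labels_cons Hl in_cons => /orP [/eqP -> //|Hin].
  have Htr : transitive (fun x y => index x SV <= index y SV) by move=> ? ? ? ; exact: leq_trans.
  have Hmin := order_path_min Htr Hs.
  have : index x SV <= index l.1 SV.
    by apply: (allP Hmin); apply: map_f.
  move=> Hle; apply/negP => Hlt; move/negP: Hx; apply.
  exact: leq_ltn_trans Hle Hlt.
have [a [b [-> [Ha Hb]]]] := IH Hs.
exists (ed :: a), b; split => //; split => // l.
by rewrite labels_cons Hl; apply: Ha.
Qed.

Lemma decomp (SV : seq X) t ps :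
  all (ordered_by lab SV) ps ->
  exists P : seq (seq E), size P = (size ps).*2 /\ flatten P = flatten ps /\
    forall n, sideok (fun x => index x SV < t) (~~ odd n) (nth [::] P n).
Proof.
elim: ps => [|q ps IH] /=.
  by move=> _; exists [::]; split => //; split => // n l; rewrite nth_nil.
move=> /andP [Hq Hps].
have [P [Hs [Hf Hn]]] := IH Hps.
move: Hq => /andP [_ Hsort].
have [a [b [Hab [Ha Hb]]]] := split_seg t Hsort.
exists (a :: b :: P); split; first by rewrite /= Hs.
split; first by rewrite /= Hf Hab catA.
by case=> [|[|n]] //=; rewrite negbK.
Qed.

Lemma labels_flatten l Q : l \in labels lab (flatten Q) ->
  exists2 q, q \in Q & l \in labels lab q.
Proof.
elim: Q => [|q Q IH] //=.
rewrite /labels pmap_cat mem_cat => /orP [H|/IH [q' Hq' H]].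
  by exists q => //; rewrite in_cons eqxx.
by exists q' => //; rewrite in_cons Hq' orbT.
Qed.

Lemma labels_in_flatten l q Q : q \in Q -> l \in labels lab q ->
  l \in labels lab (flatten Q).
Proof.
elim: Q => [|q' Q IH] //=.
rewrite in_cons /labels pmap_cat mem_cat => /orP [/eqP <- -> //|Hq Hl].
by rewrite IH ?orbT.
Qed.

Lemma sat_consistent (a : X -> bool) p :
  (forall l, l \in labels lab p -> a l.1 = l.2) -> consistent lab p.
Proof.
move=> H x [/H /= H1 /H /= H2]; by rewrite H1 in H2.
Qed.

Lemma fool_bound (c : nat) (root leaf : N) (f : (X -> bool) -> bool)
  (SV : seq X) (t : nat) (I : finType) (w : I -> X -> bool) :
  0 < c ->
  computes src dst lab root leaf f ->
  (forall p, computational src dst lab root leaf p ->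
      exists ps : seq (seq E),
        size ps = c /\ flatten ps = p /\ all (ordered_by lab SV) ps) ->
  (forall i, f (w i)) ->
  (forall i j, i != j ->
     ~~ f (fun x => if index x SV < t then w i x else w j x) \/
     ~~ f (fun x => if index x SV < t then w j x else w i x)) ->
  #|I| <= #|N| ^ (c.*2.-1).
Proof.
move=> c0 Hcomp Hord Hf Hfool.
pose side := fun x => index x SV < t.
pose R := fun i (bs : (c.*2.-1).-tuple N) => exists P : seq (seq E),
  size P = c.*2 /\ chain root leaf P bs /\
  (forall n, sideok side (~~ odd n) (nth [::] P n)) /\
  (forall l, l \in labels lab (flatten P) -> w i l.1 = l.2).
have HR : forall i, exists bs, R i bs.
  move=> i; have [p [[Hw Hc] Hl]] := (Hcomp (w i)).1 (Hf i).
  have [ps [Hs [Hfl Hps]]] := Hord p (conj Hw Hc).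
  have [P [HsP [HfP Hside]]] := decomp t Hps.
  have HP0 : P != [::] by rewrite -size_eq0 HsP Hs double_eq0 -lt0n.
  have [bs [Hbs1 Hbs2]] := walk_chain (eq_ind _ (fun p => walk src dst root p leaf) Hw _ (esym (etrans HfP Hfl))) HP0.
  have Hsz : size bs == c.*2.-1.
    by rewrite -Hs -HsP Hbs1.
  exists (Tuple Hsz); exists P; split; first by rewrite HsP Hs.
  split; first by split.
  split => // l; rewrite HfP Hfl; exact: Hl.
pose phi := fun i => proj1_sig (constructive_indefinite_description _ (HR i)).
have Hphi : forall i, R i (phi i) by move=> i; exact: proj2_sig (constructive_indefinite_description _ (HR i)).
have mixok : forall i j bs, R i bs -> R j bs ->
    f (fun x => if side x then w i x else w j x).
  move=> i j bs [Pi [Hsi [Hci [Hsdi Hli]]]] [Pj [Hsj [Hcj [Hsdj Hlj]]]].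
  pose Q := mkseq (fun n => if odd n then nth [::] Pj n else nth [::] Pi n) c.*2.
  apply/(Hcomp _).2; exists (flatten Q).
  have Hlab : forall l, l \in labels lab (flatten Q) ->
      (if side l.1 then w i l.1 else w j l.1) = l.2.
    move=> l /labels_flatten [q /mapP [n]]; rewrite mem_iota add0n => /= Hn -> Hl.
    case Ho: (odd n) Hl => Hl.
      rewrite (Hsdj n _ Hl) /= Ho; apply: Hlj; apply: labels_in_flatten Hl.
      by apply: mem_nth; rewrite Hsj.
    rewrite (Hsdi n _ Hl) /= Ho; apply: Hli; apply: labels_in_flatten Hl.
    by apply: mem_nth; rewrite Hsi.
  split => //; split; last exact: (@sat_consistent (fun x => if side x then w i x else w j x) _ Hlab).
  apply: (@chain_walk _ _ _ bs); split; first by rewrite size_mkseq size_tuple prednK // double_gt0.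
  move=> n; rewrite size_mkseq => Hn; rewrite nth_mkseq //.
  by case: (odd n); [apply: (proj2 Hcj); rewrite Hsj | apply: (proj2 Hci); rewrite Hsi].
have inj : injective phi.
  move=> i j Heq; case: (eqVneq i j) => // ne; exfalso.
  have Hi := Hphi i; have Hj := Hphi j; rewrite -Heq in Hj.
  case: (Hfool i j ne) => /negP; apply; [exact: (mixok i j (phi i)) | exact: (mixok j i (phi i))].
by have := leq_card _ inj; rewrite card_tuple.
Qed.

End PartA.

Section PartB.
Variables (V : finType) (e : rel V) (sd : cnf_var e -> bool).
Variable M : seq (V * V).
Hypothesis HM : forall x, x \in M -> [&& e x.1 x.2, sd (inl x.1) & ~~ sd (inl x.2)].
Hypothesis HU1 : uniq (map fst M).
Hypothesis HU2 : uniq (map snd M).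

Definition wS (S : seq bool) (x : cnf_var e) : bool :=
  match x with
  | inl v => if v \in map fst M then nth false S (index v (map fst M))
             else if v \in map snd M then ~~ nth false S (index v (map snd M))
             else true
  | inr A => ~~ has (fun y => val A == [set y.1; y.2]) M
  end.

Lemma idx1 x : x \in M -> index x.1 (map fst M) = index x M.
Proof.
move=> Hx; have Hj : index x M < size M by rewrite index_mem.
by rewrite -{1}(nth_index x Hx) -(nth_map x x.1 fst) // index_uniq // size_map.
Qed.

Lemma idx2 x : x \in M -> index x.2 (map snd M) = index x M.
Proof.
move=> Hx; have Hj : index x M < size M by rewrite index_mem.
by rewrite -{1}(nth_index x Hx) -(nth_map x x.2 snd) // index_uniq // size_map.
Qed.

Lemma notfst x : x \in M -> x.2 \notin map fst M.
Proof.
move=> Hx; apply/mapP => [[y Hy Hxy]].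
have := HM Hx; have := HM Hy; rewrite -Hxy => /and3P [_ H1 _] /and3P [_ _ H2].
by rewrite H1 in H2.
Qed.

Lemma wS1 S x : x \in M -> wS S (inl x.1) = nth false S (index x M).
Proof. by move=> Hx /=; rewrite map_f // idx1. Qed.

Lemma wS2 S x : x \in M -> wS S (inl x.2) = ~~ nth false S (index x M).
Proof. by move=> Hx /=; rewrite (negbTE (notfst Hx)) map_f // idx2. Qed.

Lemma exists2set (P : pred V) a b :
  [exists u in [set a; b], P u] = P a || P b.
Proof.
apply/existsP/orP.
  by case=> u /andP []; rewrite !inE => /orP [] /eqP -> H; [left|right].
by case=> H; [exists a | exists b]; rewrite !inE eqxx ?orbT.
Qed.

Lemma wS_sat S : CNF (wS S).
Proof.
apply/forallP => A; case Hh: (has (fun y => val A == [set y.1; y.2]) M).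
  move/hasP: Hh => [x Hx /eqP ->]; rewrite exists2set wS1 // wS2 //.
  by rewrite orbN orbT.
by rewrite /= Hh.
Qed.

Definition mixw (a b : cnf_var e -> bool) x := if sd x then a x else b x.

Lemma wS_fool (S T : seq bool) : size S = size M -> size T = size M -> S != T ->
  ~~ CNF (mixw (wS S) (wS T)) \/ ~~ CNF (mixw (wS T) (wS S)).
Proof.
move=> HS HT HST.
have [x Hx Hne] : exists2 x, x \in M & nth false S (index x M) != nth false T (index x M).
  case: M HM HU1 HU2 HS HT => [|x0 M'] _ HU1' _ HS HT.
    by move: HST; case: S T HS HT => [|? ?] [|? ?].
  case Hh: (has (fun x => nth false S (index x (x0 :: M')) != nth false T (index x (x0 :: M'))) (x0 :: M')).
    by move/hasP: Hh => [x Hx Hne]; exists x.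
  move/hasPn: Hh => Hall; move/negP: HST; case.
  apply/eqP; apply: (eq_from_nth (x0 := false)); first by rewrite HS HT.
  move=> j; rewrite HS => Hj.
  have Hm : nth x0 (x0 :: M') j \in x0 :: M' by apply: mem_nth.
  have Hu : uniq (x0 :: M') by apply: (map_uniq (f := fst)).
  by have := Hall _ Hm; rewrite index_uniq // => /negPn /eqP.
have He : is_edge_set e [set x.1; x.2].
  apply/existsP; exists x.1; apply/existsP; exists x.2.
  by rewrite eqxx andbT; case/and3P: (HM Hx).
pose A : edgeT e := Sub [set x.1; x.2] He.
have HA : has (fun y => val A == [set y.1; y.2]) M by apply/hasP; exists x.
have /and3P [_ H1 H2] := HM Hx.
have clause : forall a b, ~~ ((mixw (wS a) (wS b) (inr A)) ||
    [exists u in val A, mixw (wS a) (wS b) (inl u)]) ->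
    ~~ CNF (mixw (wS a) (wS b)).
  by move=> a b Hc; apply/negP => /forallP /(_ A); apply/negP.
have wA : forall a, wS a (inr A) = false by move=> a; rewrite /= HA.
have vA : val A = [set x.1; x.2] by [].
case HSx: (nth false S (index x M)) Hne; case HTx: (nth false T (index x M)) => // _.
  right; apply: clause.
  by rewrite /mixw !wA !if_same vA exists2set !wS1 // !wS2 // H1 (negbTE H2) /= HSx HTx.
left; apply: clause.
by rewrite /mixw !wA !if_same vA exists2set !wS1 // !wS2 // H1 (negbTE H2) /= HSx HTx.
Qed.

End PartB.

Section PartC.
Variables (r k : nat).
Local Notation V := (CTvert r k).
Local Notation TN := (Tnode r).

Definition np (a : TN) : nat := (a : nat).+1.

Lemma np_inj : injective np.
Proof. by move=> a b [] /val_inj. Qed.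

Lemma tpar_lt (a : TN) : ((np a)./2).-1 < 2 ^ r.+1 - 1.
Proof. have := ltn_ord a; rewrite /np; lia. Qed.

Definition tpar (a : TN) : TN := Ordinal (tpar_lt a).

Lemma np_tpar (a : TN) : 2 <= np a -> np (tpar a) = (np a)./2.
Proof. rewrite /np /=; lia. Qed.

Lemma np_ge1 a : 1 <= np a. Proof. by []. Qed.

Lemma Tadj_sym (a b : TN) : Tadj a b = Tadj b a.
Proof. by rewrite /Tadj orbC. Qed.

Lemma Tadj_neq (a b : TN) : Tadj a b -> a != b.
Proof.
move=> H; apply/eqP => E; subst b; move: H.
by rewrite /Tadj /Tchild orbb; lia.
Qed.

Lemma Tadj_par (a : TN) : 2 <= np a -> Tadj a (tpar a).
Proof.
move=> H; rewrite /Tadj /Tchild; apply/orP; right.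
move: (np_tpar H); rewrite /np => E; rewrite E; lia.
Qed.

Lemma np_iter i (a : TN) : 1 <= np a %/ 2 ^ i -> np (iter i tpar a) = np a %/ 2 ^ i.
Proof.
elim: i => [|i IH] H; first by rewrite expn0 divn1.
have E : np a %/ 2 ^ i.+1 = (np a %/ 2 ^ i) %/ 2 by rewrite expnS mulnC divnMA.
have H' : 1 <= np a %/ 2 ^ i by move: H; rewrite E; lia.
rewrite iterS np_tpar IH // ?E ?divn2 //.
move: H; rewrite E; lia.
Qed.

Definition cnt (L : pred V) (a : TN) := #|[set v : V | (v.1 == a) && L v]|.
Definition sg (L : pred V) a b := cnt L a + cnt L b.

Lemma card_node (a : TN) : #|[set v : V | v.1 == a]| = k.
Proof.
have -> : [set v : V | v.1 == a] = setX [set a] [set: 'I_k].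
  by apply/setP => v; rewrite !inE andbT.
by rewrite cardsX cards1 cardsT card_ord mul1n.
Qed.

Lemma cnt_sum L (a : TN) : cnt L a + cnt (predC L) a = k.
Proof.
transitivity #|[set v : V | v.1 == a]|; last exact: card_node.
rewrite /cnt -(cardsID [set v : V | L v] [set v : V | v.1 == a]).
by congr (_ + _); apply: eq_card => v; rewrite !inE // andbC.
Qed.

Lemma cnt_compl L (a : TN) : cnt (predC L) a = k - cnt L a.
Proof. have := cnt_sum L a; lia. Qed.

Lemma cnt_le L (a : TN) : cnt L a <= k.
Proof. have := cnt_sum L a; lia. Qed.

Lemma cnt2 (P : pred V) (a b : TN) : a != b ->
  #|[set v : V | ((v.1 == a) || (v.1 == b)) && P v]| = cnt P a + cnt P b.
Proof.
move=> ab; rewrite /cnt -cardsUI.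
have -> : [set v : V | (v.1 == a) && P v] :&: [set v : V | (v.1 == b) && P v] = set0.
  apply/setP => v; rewrite !inE; apply/negP => /andP [/andP [/eqP -> _] /andP [/eqP E _]].
  by rewrite E eqxx in ab.
rewrite cards0 addn0; apply: eq_card => v; rewrite !inE; idtac.
by rewrite andb_orl.
Qed.

Lemma sg_sym L (a b : TN) : sg L a b = sg L b a.
Proof. by rewrite /sg addnC. Qed.

Lemma sg_compl L (a b : TN) : sg (predC L) a b = k.*2 - sg L a b.
Proof. rewrite /sg !cnt_compl; have := cnt_le L a; have := cnt_le L b; lia. Qed.


Definition matching (L : pred V) (M : seq (V * V)) :=
  (forall x, x \in M -> [&& CTadj x.1 x.2, L x.1 & ~~ L x.2]) /\
  uniq (map fst M) /\ uniq (map snd M).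

Definition nodesin (S : pred TN) (M : seq (V * V)) :=
  forall x, x \in M -> S x.1.1 && S x.2.1.

Lemma mem_zip1 (T1 T2 : eqType) (s : seq T1) (t : seq T2) x :
  x \in zip s t -> (x.1 \in s) && (x.2 \in t).
Proof.
elim: s t => [|a s IH] [|b t] //=.
rewrite in_cons => /orP [/eqP -> /=|/IH /andP [H1 H2]].
  by rewrite !in_cons !eqxx.
by rewrite !in_cons H1 H2 !orbT.
Qed.

Lemma uniq_zip1 (T1 T2 : eqType) (s : seq T1) (t : seq T2) :
  uniq s -> uniq (map fst (zip s t)).
Proof.
elim: s t => [|a s IH] [|b t] //= /andP [Ha Hs].
rewrite IH // andbT; apply/mapP => [[y /mem_zip1 /andP [H1 _] E]].
by rewrite E H1 in Ha.
Qed.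

Lemma uniq_zip2 (T1 T2 : eqType) (s : seq T1) (t : seq T2) :
  uniq t -> uniq (map snd (zip s t)).
Proof.
elim: s t => [|a s IH] [|b t] //= /andP [Ha Hs].
rewrite IH // andbT; apply/mapP => [[y /mem_zip1 /andP [_ H1] E]].
by rewrite E H1 in Ha.
Qed.

Definition near (a b : TN) := (a == b) || Tadj a b.

Lemma CTadj_near (L : pred V) (v w : V) : L v -> ~~ L w -> near v.1 w.1 -> CTadj v w.
Proof.
move=> Hv Hw /orP [/eqP E|H]; rewrite /CTadj; last by rewrite H orbT.
rewrite E eqxx /=; apply/orP; left; apply/negP => /eqP E2.
have : v = w by case: v w E E2 Hv Hw => [? ?] [? ?] /= -> ->.
by move=> Evw; move: Hv; rewrite Evw (negbTE Hw).
Qed.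

Lemma zip_match (L : pred V) (A B : {set V}) :
  (forall v, v \in A -> L v) -> (forall w, w \in B -> ~~ L w) ->
  (forall v w, v \in A -> w \in B -> near v.1 w.1) ->
  exists M, matching L M /\ size M = minn #|A| #|B| /\
    forall x, x \in M -> (x.1 \in A) && (x.2 \in B).
Proof.
move=> HA HB Hn; exists (zip (enum A) (enum B)).
split; last split.
- split; last by rewrite uniq_zip1 ?uniq_zip2 ?enum_uniq.
  move=> x /mem_zip1 /andP []; rewrite !mem_enum => H1 H2.
  by rewrite (CTadj_near (HA _ H1) (HB _ H2) (Hn _ _ H1 H2)) HA // HB.
- by rewrite size_zip -!cardE.
- by move=> x /mem_zip1; rewrite !mem_enum.
Qed.

Lemma match_cat (L : pred V) M1 M2 : matching L M1 -> matching L M2 ->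
  (forall x y, x \in M1 -> y \in M2 -> (x.1 != y.1) && (x.2 != y.2)) ->
  matching L (M1 ++ M2).
Proof.
move=> [H1 [U1 V1]] [H2 [U2 V2]] D; split.
  by move=> x; rewrite mem_cat => /orP [/H1|/H2].
rewrite !map_cat !cat_uniq U1 U2 V1 V2 /= !andbT; split; apply/hasPn => z /mapP [y Hy ->];
  apply/mapP => [[x Hx E]]; have := D x y Hx Hy; rewrite E eqxx //= andbF //.
Qed.

Lemma CTadj_sym (v w : V) : CTadj v w = CTadj w v.
Proof. by rewrite /CTadj Tadj_sym eq_sym [w.2 == _]eq_sym. Qed.

Lemma match_swap (L : pred V) M : matching (predC L) M ->
  matching L (map (fun x => (x.2, x.1)) M).
Proof.
move=> [H [U1 U2]]; split; last by rewrite -!map_comp; split.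
move=> y /mapP [x Hx ->] /=; have /and3P [H1 H2 H3] := H x Hx.
by rewrite CTadj_sym H1 /= negbK in H2 H3 *; rewrite H3.
Qed.

Lemma nodesin_cat S M1 M2 : nodesin S M1 -> nodesin S M2 -> nodesin S (M1 ++ M2).
Proof. by move=> H1 H2 x; rewrite mem_cat => /orP [/H1|/H2]. Qed.

Lemma nodesin_sub (S S' : pred TN) M : (forall a, S a -> S' a) -> nodesin S M -> nodesin S' M.
Proof. by move=> HS H x /H /andP [/HS -> /HS ->]. Qed.


Lemma cardP2 (P : pred V) (a b : TN) : a != b ->
  #|[set v : V | ((v.1 == a) || (v.1 == b)) && P v]| = cnt P a + cnt P b.
Proof. exact: cnt2. Qed.

Lemma clique_match (L : pred V) (a b : TN) : Tadj a b -> sg L a b = k ->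
  exists M, matching L M /\ k <= size M /\
    nodesin (fun u => (u == a) || (u == b)) M.
Proof.
move=> Hab Hs; have ab := Tadj_neq Hab.
pose A := [set v : V | ((v.1 == a) || (v.1 == b)) && L v].
pose B := [set v : V | ((v.1 == a) || (v.1 == b)) && predC L v].
have cA : #|A| = k by rewrite cnt2.
have cB : #|B| = k.
  rewrite cnt2 // !cnt_compl; move: Hs; rewrite /sg.
  have := cnt_le L a; have := cnt_le L b; lia.
have hA : forall v, v \in A -> L v by move=> v; rewrite inE => /andP [].
have hB : forall v, v \in B -> ~~ L v by move=> v; rewrite inE => /andP [].
have hN : forall v w, v \in A -> w \in B -> near v.1 w.1.
  move=> v w; rewrite !inE => /andP [Hv _] /andP [Hw _]; rewrite /near.
  case/orP: Hv => /eqP ->; case/orP: Hw => /eqP -> ; rewrite ?eqxx //.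
    by rewrite Hab orbT.
  by rewrite Tadj_sym Hab orbT.
have [M [HM [Hsz Hin]]] := zip_match hA hB hN.
exists M; split => //; split; first by rewrite Hsz cA cB minnn.
by move=> x /Hin /andP []; rewrite !inE => /andP [-> _] /andP [-> _].
Qed.

Lemma jump_match (L : pred V) (a b c : TN) : Tadj a b -> Tadj b c -> a != c ->
  k < sg L a b -> sg L b c < k ->
  exists M, matching L M /\ k <= size M /\
    nodesin (fun u => [|| u == a, u == b | u == c]) M.
Proof.
move=> Hab Hbc ac H1 H2.
have ab := Tadj_neq Hab; have bc := Tadj_neq Hbc.
pose A1 := [set v : V | (v.1 == b) && L v].
pose B1 := [set v : V | (v.1 == c) && predC L v].
pose A2 := [set v : V | (v.1 == a) && L v].
pose B2 := [set v : V | ((v.1 == a) || (v.1 == b)) && predC L v].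
have hA1 : forall v, v \in A1 -> L v by move=> v; rewrite inE => /andP [].
have hB1 : forall v, v \in B1 -> ~~ L v by move=> v; rewrite inE => /andP [].
have hN1 : forall v w, v \in A1 -> w \in B1 -> near v.1 w.1.
  move=> v w; rewrite !inE => /andP [/eqP -> _] /andP [/eqP -> _].
  by rewrite /near Hbc orbT.
have [M1 [HM1 [Hsz1 Hin1]]] := zip_match hA1 hB1 hN1.
have hA2 : forall v, v \in A2 -> L v by move=> v; rewrite inE => /andP [].
have hB2 : forall v, v \in B2 -> ~~ L v by move=> v; rewrite inE => /andP [].
have hN2 : forall v w, v \in A2 -> w \in B2 -> near v.1 w.1.
  move=> v w; rewrite !inE => /andP [/eqP -> _] /andP [/orP [] /eqP -> _].
    by rewrite /near eqxx.
  by rewrite /near Hab orbT.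
have [M2 [HM2 [Hsz2 Hin2]]] := zip_match hA2 hB2 hN2.
exists (M1 ++ M2); split; last split.
- apply: match_cat => // x y /Hin1 /andP [] Hx1 Hx2 /Hin2 /andP [] Hy1 Hy2.
  move: Hx1 Hx2 Hy1 Hy2; rewrite !inE => /andP [/eqP Hx1 _] /andP [/eqP Hx2 _].
  move=> /andP [/eqP Hy1 _] /andP [Hy2 _].
  apply/andP; split; apply/eqP => E.
    by move: ab; rewrite -Hx1 -Hy1 E eqxx.
  move: Hy2; rewrite -E Hx2 => /orP [] /eqP E2.
    by move: ac; rewrite E2 eqxx.
  by move: bc; rewrite E2 eqxx.
- rewrite size_cat Hsz1 Hsz2.
  have -> : #|B2| = cnt (predC L) a + cnt (predC L) b by rewrite cnt2.
  rewrite /A1 /B1 /A2 -/(cnt L b) -/(cnt (predC L) c) -/(cnt L a) !cnt_compl.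
  move: H1 H2; rewrite /sg.
  have := cnt_le L a; have := cnt_le L b; have := cnt_le L c; lia.
- apply: nodesin_cat => x.
    by move/Hin1; rewrite !inE => /andP [/andP [-> _] /andP [-> _]]; rewrite !orbT.
  move/Hin2; rewrite !inE => /andP [/andP [-> _] /andP [/orP [] -> _]];
    by rewrite ?orbT.
Qed.


Definition chainp d (a : TN) (u : TN) := has (fun i => u == iter i tpar a) (iota 0 d.+1).

Lemma chainpP d a u i : i <= d -> u = iter i tpar a -> chainp d a u.
Proof. by move=> Hi ->; apply/hasP; exists i; rewrite ?mem_iota ?eqxx. Qed.

Lemma chain_match (L : pred V) d (a : TN) : 0 < d ->
  (forall i, i < d -> 2 <= np (iter i tpar a)) ->
  k <= sg L a (tpar a) -> sg L (iter d.-1 tpar a) (iter d tpar a) <= k ->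
  exists M, matching L M /\ k <= size M /\ nodesin (chainp d a) M.
Proof.
elim: d a => [|d IH] a // _.
case: d IH => [|d] IH Hnp H1 H2.
  have Hs : sg L a (tpar a) = k by apply/eqP; rewrite eqn_leq H1 andbT.
  have [M [HM [Hsz Hin]]] := clique_match (Tadj_par (Hnp 0 isT)) Hs.
  exists M; split => //; split => //; apply: (nodesin_sub _ Hin).
  by move=> u /orP [] /eqP ->; [apply: (@chainpP _ _ _ 0) | apply: (@chainpP _ _ _ 1)].
case: (eqVneq (sg L a (tpar a)) k) => E.
  have [M [HM [Hsz Hin]]] := clique_match (Tadj_par (Hnp 0 isT)) E.
  exists M; split => //; split => //; apply: (nodesin_sub _ Hin).
  by move=> u /orP [] /eqP ->; [apply: (@chainpP _ _ _ 0) | apply: (@chainpP _ _ _ 1)].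
have H1' : k < sg L a (tpar a) by rewrite ltn_neqAle eq_sym E.
case: (leqP k (sg L (tpar a) (tpar (tpar a)))) => H3.
  have [M [HM [Hsz Hin]]] : exists M, matching L M /\ k <= size M /\ nodesin (chainp d.+1 (tpar a)) M.
    apply: IH => //.
    - by move=> i Hi; rewrite -iterSr; apply: Hnp.
    - by rewrite -!iterSr.
  exists M; split => //; split => //; apply: (nodesin_sub _ Hin).
  move=> u /hasP [i]; rewrite mem_iota add0n => /= Hi /eqP ->.
  by apply: (@chainpP _ _ _ i.+1) => //; rewrite iterSr.
have Htp : 2 <= np (tpar a) by have := Hnp 1 isT.
have ac : a != tpar (tpar a).
  apply/negP => /eqP E2; move: H3; rewrite -E2 sg_sym => H3.
  by move: (ltn_trans H3 H1'); rewrite ltnn.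
have [M [HM [Hsz Hin]]] := jump_match (Tadj_par (Hnp 0 isT)) (Tadj_par Htp) ac H1' H3.
exists M; split => //; split => //; apply: (nodesin_sub _ Hin).
move=> u /or3P [] /eqP ->.
- by apply: (@chainpP _ _ _ 0).
- by apply: (@chainpP _ _ _ 1).
- by apply: (@chainpP _ _ _ 2).
Qed.


Lemma chain_match_rev (L : pred V) d (a : TN) : 0 < d ->
  (forall i, i < d -> 2 <= np (iter i tpar a)) ->
  sg L a (tpar a) <= k -> k <= sg L (iter d.-1 tpar a) (iter d tpar a) ->
  exists M, matching L M /\ k <= size M /\ nodesin (chainp d a) M.
Proof.
move=> Hd Hnp H1 H2.
have [M [HM [Hsz Hin]]] : exists M, matching (predC L) M /\ k <= size M /\ nodesin (chainp d a) M.
  apply: chain_match => //; rewrite sg_compl.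
    move: H1; have := cnt_le L a; have := cnt_le L (tpar a); rewrite /sg; lia.
  move: H2; have := cnt_le L (iter d.-1 tpar a); have := cnt_le L (iter d tpar a); rewrite /sg; lia.
exists (map (fun x => (x.2, x.1)) M); split; first exact: match_swap.
rewrite size_map; split => // x /mapP [y Hy ->] /=.
by have /andP [-> ->] := Hin y Hy.
Qed.

Lemma divdiv q a b : q %/ 2 ^ a %/ 2 ^ b = q %/ 2 ^ (a + b).
Proof. by rewrite -divnMA -expnD. Qed.

Lemma div_mono q a b : a <= b -> q %/ 2 ^ b <= q %/ 2 ^ a.
Proof. by move=> H; apply: leq_div2l; rewrite ?expn_gt0 ?leq_pexp2l. Qed.

Lemma div_same q e f m g1 g2 : q %/ 2 ^ e = g1 -> q %/ 2 ^ f = g2 -> 0 < m ->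
  m <= g1 < m.*2 -> m <= g2 < m.*2 -> g1 = g2.
Proof.
wlog ef : e f g1 g2 / e <= f.
  move=> W H1 H2 Hm Hg1 Hg2; case: (leqP e f) => ef; first exact: (W e f).
  by symmetry; apply: (W f e) => //; apply: ltnW.
move=> H1 H2 Hm Hg1 Hg2; rewrite -(subnKC ef) -divdiv H1 in H2.
case E: (f - e) H2 => [|j]; first by rewrite expn0 divn1.
move=> H2; have : g1 %/ 2 ^ j.+1 <= g1 %/ 2 ^ 1 by apply: div_mono.
rewrite H2 expn1; lia.
Qed.

Definition insub (p h : nat) (a : TN) := has (fun d => np a %/ 2 ^ d == p) (iota 0 h.+1).

Lemma insubP p h a : reflect (exists2 d, d <= h & np a %/ 2 ^ d = p) (insub p h a).
Proof.
apply: (iffP hasP) => [[d] | [d Hd E]].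
  by rewrite mem_iota add0n ltnS => Hd /eqP E; exists d.
by exists d; rewrite ?mem_iota ?add0n ?ltnS ?E.
Qed.


Lemma insub_mono p h h' a : h <= h' -> insub p h a -> insub p h' a.
Proof. by move=> Hh /insubP [d Hd E]; apply/insubP; exists d => //; apply: leq_trans Hh. Qed.

Lemma insub_up g p h a : 4 * p <= g < 4 * p + 4 -> insub g h a -> insub p h.+2 a.
Proof.
move=> Hg /insubP [d Hd E]; apply/insubP; exists d.+2 => //.
rewrite -(addn2 d) -divdiv E; lia.
Qed.

Lemma anc (x : TN) d g p : 1 <= p -> np x %/ 2 ^ d = g -> 4 * p <= g < 4 * p + 4 ->
  forall i, i <= d.+2 ->
  [/\ np (iter i tpar x) = np x %/ 2 ^ i,
      (i < d.+2 -> 2 <= np (iter i tpar x)),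
      insub p d.+2 (iter i tpar x) &
      (forall gx e, 4 * p <= gx < 4 * p + 4 -> gx != g -> np (iter i tpar x) %/ 2 ^ e != gx)].
Proof.
move=> Hp Hd Hg i Hi.
have Etop : np x %/ 2 ^ d.+2 = p by rewrite -(addn2 d) -divdiv Hd; lia.
have Eup : np x %/ 2 ^ d.+1 = g %/ 2 by rewrite -(addn1 d) -divdiv Hd expn1 divn2.
have Hge : p <= np x %/ 2 ^ i by rewrite -Etop; apply: div_mono.
have Enp : np (iter i tpar x) = np x %/ 2 ^ i by apply: np_iter; lia.
split => //.
- move=> Hlt; rewrite Enp; have : np x %/ 2 ^ d.+1 <= np x %/ 2 ^ i by apply: div_mono.
  rewrite Eup; lia.
- apply/insubP; exists (d.+2 - i); first exact: leq_subr.
  by rewrite Enp divdiv subnKC.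
- move=> gx e Hgx ne; apply/eqP => E; move/negP: ne; apply; apply/eqP.
  rewrite Enp divdiv in E.
  case: (leqP i d) => Hid.
    apply: (@div_same (np x) (i + e) d (4 * p)) => //; lia.
  have : np x %/ 2 ^ (i + e) <= np x %/ 2 ^ d.+1 by apply: div_mono; lia.
  rewrite E Eup; lia.
Qed.

Variable pos : V -> nat.
Hypothesis pos_inj : injective pos.
Variable T0 : nat.
Hypothesis posT0 : forall v, pos v < T0.

Definition Lt (t : nat) : pred V := fun v => pos v < t.

Lemma cnt_mono t t' a : t <= t' -> cnt (Lt t) a <= cnt (Lt t') a.
Proof.
move=> H; apply: subset_leq_card; apply/subsetP => v; rewrite !inE /Lt.
by case/andP => -> /= H'; apply: leq_trans H.
Qed.

Lemma sg_mono t t' a b : t <= t' -> sg (Lt t) a b <= sg (Lt t') a b.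
Proof. by move=> H; rewrite /sg leq_add // cnt_mono. Qed.

Lemma ivt (P : pred V) j : j <= #|[set v : V | P v]| ->
  exists t, #|[set v : V | P v && (pos v < t)]| = j.
Proof.
pose f t := #|[set v : V | P v && (pos v < t)]|.
have f0 : f 0 = 0 by apply/eqP; rewrite cards_eq0; apply/eqP/setP => v; rewrite !inE ltn0 andbF.
have fT : f T0 = #|[set v : V | P v]| by apply: eq_card => v; rewrite !inE posT0 andbT.
have fS : forall n, f n.+1 <= (f n).+1.
  move=> n; rewrite /f.
  have sub : [set v : V | P v && (pos v < n.+1)] \subset
             [set v : V | P v && (pos v < n)] :|: [set v : V | pos v == n].
    apply/subsetP => v; rewrite !inE ltnS leq_eqVlt => /andP [-> /orP [->|->]] //.
    by rewrite orbT.
  apply: (leq_trans (subset_leq_card sub)); apply: (leq_trans (leq_card_setU _ _)).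
  rewrite -addn1 leq_add2l; apply/card_le1P => u; rewrite inE => /eqP Hu w.
  rewrite !inE; apply/eqP/eqP => [Hw|->] //; apply: pos_inj; by rewrite Hw Hu.
suff : forall n, j <= f n -> exists t, f t = j.
  by move=> H Hj; apply: (H T0); rewrite fT.
elim => [|n IH] H.
  by exists 0; apply/eqP; rewrite eqn_leq H f0.
case: (leqP j (f n)) => H'; first exact: IH.
by exists n.+1; apply/eqP; rewrite eqn_leq H andbT; have := fS n; lia.
Qed.

Definition Inv p h t G :=
  (exists M, matching (Lt t) M /\ G <= size M /\ nodesin (insub p h) M) /\
  (exists x, insub p h x /\ k <= sg (Lt t) x (tpar x)) /\
  (exists x, insub p h x /\ sg (Lt t) x (tpar x) <= k).


Lemma base p h : 1 <= h -> 1 <= p -> p.+1 * 2 ^ h <= 2 ^ r.+1 ->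
  exists t, Inv p h t k.
Proof.
move=> Hh Hp Hsz.
have h2 : 2 <= 2 ^ h by rewrite -{1}(expn1 2) leq_exp2l.
have hb : (p.+1).*2 <= 2 ^ r.+1.
  apply: leq_trans Hsz; rewrite -muln2 leq_mul2l h2 orbT //.
have Ha : p.-1 < 2 ^ r.+1 - 1 by lia.
have Hb : (p.*2).-1 < 2 ^ r.+1 - 1 by lia.
pose a : TN := Ordinal Ha.
pose b : TN := Ordinal Hb.
have npa : np a = p by rewrite /np /=; lia.
have npb : np b = p.*2 by rewrite /np /=; lia.
have pab : tpar b = a by apply: np_inj; rewrite np_tpar npb ?npa ?doubleK //; lia.
have ba : b != a by apply/negP => /eqP E; move: npb; rewrite E npa; lia.
have [t Ht] : exists t, #|[set v : V | ((v.1 == b) || (v.1 == a)) && (pos v < t)]| = k.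
  apply: ivt; have := cnt2 (fun _ => true) ba; rewrite /cnt.
  have -> : #|[set v : V | (v.1 == b) && true]| = k.
    by transitivity #|[set v : V | v.1 == b]|; [apply: eq_card => v; rewrite !inE andbT | exact: card_node].
  have -> : #|[set v : V | (v.1 == a) && true]| = k.
    by transitivity #|[set v : V | v.1 == a]|; [apply: eq_card => v; rewrite !inE andbT | exact: card_node].
  move=> E; suff -> : #|[set v : V | (v.1 == b) || (v.1 == a)]| = k + k by rewrite leq_addr.
  by rewrite -E; apply: eq_card => v; rewrite !inE andbT.
have Hs : sg (Lt t) b (tpar b) = k.
  rewrite pab /sg -(cnt2 (Lt t) ba).
  by transitivity #|[set v : V | ((v.1 == b) || (v.1 == a)) && (pos v < t)]|; [apply: eq_card => v; rewrite !inE | exact: Ht].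
have inb : insub p h b by apply/insubP; exists 1 => //; rewrite npb expn1 divn2 doubleK.
have ina : insub p h a by apply/insubP; exists 0 => //; rewrite npa expn0 divn1.
exists t; split; last split; try by exists b; rewrite Hs.
have n2 : 2 <= np b by rewrite npb; lia.
have [M [HM [Hsz' Hin]]] := clique_match (Tadj_par n2) Hs.
exists M; split => //; split => //; apply: (nodesin_sub _ Hin).
by move=> u /orP [] /eqP ->; rewrite ?pab.
Qed.


Lemma chainp_inv d a u : chainp d a u -> exists2 i, i <= d & u = iter i tpar a.
Proof. by move/hasP => [i]; rewrite mem_iota add0n ltnS => Hi /eqP ->; exists i. Qed.

Lemma step p h ty tx tz gy gx gz G : 1 <= p -> 3 <= h ->
  4 * p <= gy < 4 * p + 4 -> 4 * p <= gx < 4 * p + 4 -> 4 * p <= gz < 4 * p + 4 ->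
  gx != gy -> gx != gz -> ty <= tx -> tx <= tz ->
  Inv gy (h - 2) ty G -> Inv gx (h - 2) tx G -> Inv gz (h - 2) tz G ->
  Inv p h tx (G + k).
Proof.
move=> Hp Hh Hgy Hgx Hgz nxy nxz Hyx Hxz [_ [[xy [Hiny Hsy]] _]]
  [[Mx [HMx [HszX HinX]]] _] [_ [_ [xz [Hinz Hsz]]]].
have Hsy' : k <= sg (Lt tx) xy (tpar xy) := leq_trans Hsy (sg_mono _ _ Hyx).
have Hsz' : sg (Lt tx) xz (tpar xz) <= k := leq_trans (sg_mono _ _ Hxz) Hsz.
move/insubP: Hiny => [dy Hdy Edy]; move/insubP: Hinz => [dz Hdz Edz].
pose good u := insub p h u && ~~ insub gx (h - 2) u.
have goodA : forall x d g, np x %/ 2 ^ d = g -> 4 * p <= g < 4 * p + 4 -> g != gx ->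
    d <= h - 2 -> forall i, i <= d.+2 -> good (iter i tpar x).
  move=> x d g E Hg ne Hd i Hi; have [_ _ Hin Hne] := anc Hp E Hg Hi.
  apply/andP; split; first by apply: insub_mono Hin; lia.
  have ne' : gx != g by rewrite eq_sym.
  apply/negP => /insubP [e _ Ee]; move/eqP: (Hne gx e Hgx ne'); apply.
  exact: Ee.
have gyx : gy != gx by rewrite eq_sym.
have gzx : gz != gx by rewrite eq_sym.
have Gy := goodA _ _ _ Edy Hgy gyx Hdy.
have Gz := goodA _ _ _ Edz Hgz gzx Hdz.
have npy : forall i, i < dy.+2 -> 2 <= np (iter i tpar xy).
  by move=> i Hi; have [_ H _ _] := anc Hp Edy Hgy (ltnW Hi); apply: H.
have npz : forall i, i < dz.+2 -> 2 <= np (iter i tpar xz).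
  by move=> i Hi; have [_ H _ _] := anc Hp Edz Hgz (ltnW Hi); apply: H.
set cy := iter dy.+1 tpar xy; set pn := iter dy.+2 tpar xy.
set cz := iter dz.+1 tpar xz.
have Epn : iter dz.+2 tpar xz = pn.
  apply: np_inj.
  have [E1 _ _ _] := anc Hp Edy Hgy (leqnn dy.+2).
  have [E2 _ _ _] := anc Hp Edz Hgz (leqnn dz.+2).
  rewrite E1 E2 -(addn2 dy) -(addn2 dz) -!divdiv Edy Edz; lia.
have [M' [HM' [HszM' HinM']]] :
    exists M', matching (Lt tx) M' /\ k <= size M' /\ nodesin good M'.
  case: (leqP (sg (Lt tx) cy pn) k) => HA.
    have [M [HM [HszM HinM]]] := @chain_match (Lt tx) dy.+2 xy isT npy Hsy' HA.
    exists M; split => //; split => //; apply: (nodesin_sub _ HinM).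
    by move=> u /chainp_inv [i Hi ->]; apply: Gy.
  case: (leqP k (sg (Lt tx) cz pn)) => HB.
    have HB' : k <= sg (Lt tx) (iter dz.+2.-1 tpar xz) (iter dz.+2 tpar xz) by rewrite Epn.
    have [M [HM [HszM HinM]]] := @chain_match_rev (Lt tx) dz.+2 xz isT npz Hsz' HB'.
    exists M; split => //; split => //; apply: (nodesin_sub _ HinM).
    by move=> u /chainp_inv [i Hi ->]; apply: Gz.
  have Hcy : Tadj cy pn by rewrite /pn iterS; apply: Tadj_par; apply: npy.
  have Hcz : Tadj pn cz by rewrite -Epn iterS Tadj_sym; apply: Tadj_par; apply: npz.
  have ne : cy != cz.
    apply/negP => /eqP E; move: HA; rewrite E => HA.
    by move: (ltn_trans HB HA); rewrite ltnn.
  have HB' : sg (Lt tx) pn cz < k by rewrite sg_sym.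
  have [M [HM [HszM HinM]]] := jump_match Hcy Hcz ne HA HB'.
  exists M; split => //; split => //; apply: (nodesin_sub _ HinM).
  move=> u /or3P [] /eqP ->.
  - exact: Gy.
  - exact: Gy.
  - exact: Gz.
have ex_y : insub p h xy.
  by have := Gy 0 isT => /andP [].
have ex_z : insub p h xz.
  by have := Gz 0 isT => /andP [].
split; last split; [|by exists xy|by exists xz].
exists (Mx ++ M'); split; last split.
- apply: match_cat => // x y Hx Hy.
  have /andP [Hx1 Hx2] := HinX x Hx; have /andP [/andP [_ Hy1] /andP [_ Hy2]] := HinM' y Hy.
  apply/andP; split; apply/negP => /eqP E.
    by move: Hy1; rewrite -E Hx1.
  by move: Hy2; rewrite -E Hx2.
- by rewrite size_cat leq_add.
- apply: nodesin_cat.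
    apply: (nodesin_sub _ HinX) => u Hu.
    have := insub_up Hgx Hu; have -> : (h - 2).+2 = h by lia.
    by [].
  by apply: (nodesin_sub _ HinM') => u /andP [].
Qed.


Lemma main h : 1 <= h -> forall p, 1 <= p -> p.+1 * 2 ^ h <= 2 ^ r.+1 ->
  exists t, Inv p h t (k * (h.+1)./2).
Proof.
elim/ltn_ind: h => h IH Hh p Hp Hsz.
case: (leqP h 2) => Hh2.
  have -> : (h.+1)./2 = 1 by lia.
  by rewrite muln1; apply: base.
have E : 2 ^ h = 4 * 2 ^ (h - 2) by rewrite -{1}(subnKC (ltnW Hh2)) expnD.
have Hj : forall j, j < 4 -> exists t, Inv (4 * p + j) (h - 2) t (k * ((h - 2).+1)./2).
  move=> j Hj; apply: IH; try lia.
  apply: leq_trans Hsz; rewrite E mulnA leq_mul2r; apply/orP; right; lia.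
have EG : k * ((h - 2).+1)./2 + k = k * (h.+1)./2.
  by rewrite -mulnSr; congr (k * _); lia.
rewrite -EG.
have [t0 H0] := Hj 0 isT; have [t1 H1] := Hj 1 isT; have [t2 H2] := Hj 2 isT.
have R0 : 4 * p <= 4 * p + 0 < 4 * p + 4 by lia.
have R1 : 4 * p <= 4 * p + 1 < 4 * p + 4 by lia.
have R2 : 4 * p <= 4 * p + 2 < 4 * p + 4 by lia.
have n01 : 4 * p + 0 != 4 * p + 1 by lia.
have n02 : 4 * p + 0 != 4 * p + 2 by lia.
have n12 : 4 * p + 1 != 4 * p + 2 by lia.
have n10 : 4 * p + 1 != 4 * p + 0 by lia.
have n20 : 4 * p + 2 != 4 * p + 0 by lia.
have n21 : 4 * p + 2 != 4 * p + 1 by lia.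
have h3 : 3 <= h by [].
case: (leqP t0 t1) => h01; case: (leqP t1 t2) => h12.
- by exists t1; apply: (step Hp h3 R0 R1 R2 n10 n12 h01 h12 H0 H1 H2).
- case: (leqP t0 t2) => h02.
    by exists t2; apply: (step Hp h3 R0 R2 R1 n20 n21 h02 (ltnW h12) H0 H2 H1).
  by exists t0; apply: (step Hp h3 R2 R0 R1 n02 n01 (ltnW h02) h01 H2 H0 H1).
- case: (leqP t0 t2) => h02.
    by exists t0; apply: (step Hp h3 R1 R0 R2 n01 n02 (ltnW h01) h02 H1 H0 H2).
  by exists t2; apply: (step Hp h3 R1 R2 R0 n21 n20 h12 (ltnW h02) H1 H2 H0).
- by exists t1; apply: (step Hp h3 R2 R1 R0 n12 n10 (ltnW h12) (ltnW h01) H2 H1 H0).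
Qed.

End PartC.
Module RealPart.
Import Reals Lra.
Lemma INR_expn (m n : nat) : INR (expn m n) = pow (INR m) n.
Proof.
elim: n => [|n IH]; first by [].
by rewrite expnS -multE mult_INR IH.
Qed.

Section Real.
Local Open Scope R_scope.

Lemma ln_le' x y : 0 < x -> x <= y -> ln x <= ln y.
Proof.
move=> Hx Hxy; case: (Rle_lt_or_eq_dec _ _ Hxy) => H.
  by apply: Rlt_le; apply: ln_increasing.
by rewrite H; apply: Rle_refl.
Qed.

Lemma exp_le' x y : x <= y -> exp x <= exp y.
Proof.
move=> Hxy; case: (Rle_lt_or_eq_dec _ _ Hxy) => H.
  by apply: Rlt_le; apply: exp_increasing.
by rewrite H; apply: Rle_refl.
Qed.

Lemma real_bound (n m e a : nat) : leq 1 e -> leq (expn 2 m) (expn n e) -> leq a (ssrnat.double m) ->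
  Rpower (INR 2) (INR a / INR (ssrnat.double e)) <= INR n.
Proof.
move=> He Hmn Ha.
have Hn : leq 1 n.
  case: n Hmn => // ; rewrite exp0n // => H.
  by move: (leq_trans (expn_gt0 2 m) H).
have Hn' : 0 < INR n by apply: lt_0_INR; apply/ltP.
have He' : 0 < INR e by apply: lt_0_INR; apply/ltP.
have L2 : 0 < ln 2 by rewrite -ln_1; apply: ln_increasing; lra.
have Hle : INR m * ln 2 <= INR e * ln (INR n).
  rewrite -!ln_pow //; last lra.
  have -> : 2 = INR 2 by [].
  rewrite -!INR_expn; apply: ln_le'.
    by apply: lt_0_INR; apply/ltP; rewrite expn_gt0.
  by apply: le_INR; apply/leP.
have Ha' : INR a <= 2 * INR m.
  have -> : 2 * INR m = INR (ssrnat.double m) by rewrite -muln2 -multE mult_INR /=; lra.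
  by apply: le_INR; apply/leP.
have -> : INR (ssrnat.double e) = 2 * INR e by rewrite -muln2 -multE mult_INR /=; lra.
rewrite /Rpower -(exp_ln (INR n)) //; apply: exp_le'.
have Hprod : INR a * ln (INR 2) <= 2 * INR m * ln 2.
  have -> : INR 2 = 2 by [].
  by apply: Rmult_le_compat_r; lra.
apply: (Rmult_le_reg_l (2 * INR e)); first lra.
have -> : 2 * INR e * (INR a / (2 * INR e) * ln (INR 2)) = INR a * ln (INR 2).
  by field; lra.
lra.
Qed.

End Real.
End RealPart.

Theorem theorem1 (c r k : nat) (hc : 1 <= c) (hk : 1 <= k)
  (N E : finType) (src dst : E -> N) (lab : E -> option (Fvar r k * bool))
  (root leaf : N) :
  is_BP src dst root leaf ->
  computes src dst lab root leaf (@F r k) ->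
  NSOBDD src dst lab c root leaf ->
  Rdefinitions.Rle (Rpower.Rpower (Raxioms.INR 2) (Rdefinitions.Rdiv (Raxioms.INR (r * k)) (Raxioms.INR (4 * c - 2)))) (Raxioms.INR #|N|).
Proof.
move=> _ Hcomp [SV [Hperm Hord]].
pose pos := fun v : CTvert r k => index (inl v : Fvar r k) SV.
have inSV : forall x : Fvar r k, x \in SV by move=> x; rewrite (perm_mem Hperm) mem_enum.
have pos_inj : injective pos.
  move=> u v E0; have H1 := nth_index (inl u) (inSV (inl u)).
  have H2 := nth_index (inl u) (inSV (inl v)).
  rewrite /pos in E0; rewrite E0 H2 in H1; by case: H1.
have posT0 : forall v, pos v < size SV by move=> v; rewrite /pos index_mem.
have [t [M [HM HsM]]] : exists t M, matching (Lt pos t) M /\ r * k <= (size M).*2.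
  case: (posnP r) => Hr.
    exists 0, [::]; split; last by rewrite Hr.
    by split.
  have Hsz : 2 * 2 ^ r <= 2 ^ r.+1 by rewrite expnS.
  have [t [[M [HM [HG _]]] _]] := main pos_inj posT0 Hr (isT : 0 < 1) Hsz.
  exists t, M; split => //.
  have HG2 : (k * (r.+1)./2).*2 <= (size M).*2 by rewrite leq_double.
  apply: leq_trans HG2; rewrite -muln2 -mulnA mulnC leq_mul2l.
  by apply/orP; right; lia.
have [HMe [HU1 HU2]] := HM.
pose sd := fun x : Fvar r k => index x SV < t.
have HM' : forall x, x \in M -> [&& CTadj x.1 x.2, sd (inl x.1) & ~~ sd (inl x.2)].
  by move=> x /HMe.
have Hb := @fool_bound (Fvar r k) N E src dst lab c root leaf (@F r k) SV t
  ((size M).-tuple bool) (fun S => wS M (tval S)) hc Hcomp Hord.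
have Hb' : #|{:(size M).-tuple bool}| <= #|N| ^ c.*2.-1.
  apply: Hb.
    by move=> S; apply: (wS_sat HM').
  move=> S T ST; apply: (wS_fool HM' HU1 HU2); rewrite ?size_tuple //.
rewrite card_tuple card_bool in Hb'.
have -> : 4 * c - 2 = (c.*2.-1).*2 by lia.
apply: (RealPart.real_bound (m := size M)) => //; lia.
Qed.
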